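(* Let $\nu\ge 2$, let $n_1,\dots,n_\nu\ge 1$ be integers, $N=\sum_j n_j$, let $\Omega=\coprod_{j=1}^\nu P_j$ with $\#P_j=n_j$, and let $\Delta\{n_j\}\subset\mathbb{C}[S_N]$ and $\Pi$ be as in the context. For $i\ne j$ let $r_{ij}\in S_N$ be a transposition exchanging an element of $P_i$ with an element of $P_j$, let $\mathfrak r_{ij}:=\Pi r_{ij}\Pi$ (which equals $\Xi\big(\sum_{k\ne i,j}n_kE_{kk}+(n_i-1)E_{ii}+(n_j-1)E_{jj}+E_{ij}+E_{ji}\big)$ and in particular does not depend on the choice of $r_{ij}$, and $\mathfrak r_{ij}=\mathfrak r_{ji}$), and let $\tilde{\mathfrak r}_{ij}:=n_in_j\,\mathfrak r_{ij}$. Then $$[\tilde{\mathfrak r}_{ij},\tilde{\mathfrak r}_{jk}+\tilde{\mathfrak r}_{ik}]=0\quad\text{for pairwise distinct } i,j,k,$$ $$[\tilde{\mathfrak r}_{ij},\tilde{\mathfrak r}_{kl}]=0\quad\text{for pairwise distinct } i,j,k,l,$$ where $[x,y]=xy-yx$ in $\Delta\{n_j\}$.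
   Context: $S_N$ is the permutation group of $\Omega$, $Y\{n_j\}$ the subgroup of permutations preserving each $P_j$, $\Pi=\frac{1}{\prod_j n_j!}\sum_{h\in Y\{n_j\}}h$, and $\Delta\{n_j\}=\Pi\,\mathbb{C}[S_N]\,\Pi$. For a $\nu\times\nu$ nonnegative integer matrix $A=\{a_{ij}\}$ with row sums $\sum_j a_{ij}=n_i$ and column sums $\sum_i a_{ij}=n_j$, $\xi(A)$ denotes the double coset $\{g\in S_N:\#(g(P_i)\cap P_j)=a_{ij}\ \forall i,j\}$ and $\Xi(A)=\frac{1}{\#\xi(A)}\sum_{g\in\xi(A)}g$. $E_{ij}$ is the matrix unit with $1$ in position $(i,j)$ and $0$ elsewhere. *)

(* Defs.v *)
From HB Require Import structures.
From mathcomp Require Import all_boot all_order all_algebra all_fingroup all_field.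
Set Implicit Arguments. Unset Strict Implicit. Unset Printing Implicit Defensive.
Import GRing.Theory Num.Theory.
Local Open Scope ring_scope.

(* Omega is an abstract finite type T, partitioned into blocks P_j = blk^-1(j),
   j : 'I_nu.  S_N = {perm T}.  The group algebra C[S_N] is modelled as
   finitely supported functions {perm T} -> algC with convolution product. *)
Section GroupAlgebra.
Variable T : finType.

Local Notation GA := {ffun {perm T} -> algC}.

Definition gel (g : {perm T}) : GA := [ffun h => (h == g)%:R].

Definition gmul (a b : GA) : GA :=
  [ffun g => \sum_(h : {perm T}) a h * b (h^-1 * g)%g].

Definition gscale (k : algC) (a : GA) : GA := [ffun g => k * a g].

Definition gcomm (a b : GA) : GA := gmul a b - gmul b a.

Variable nu : nat.
Variable blk : T -> 'I_nu.

Definition Pblock (j : 'I_nu) : {set T} := [set x | blk x == j].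
Definition nblk (j : 'I_nu) : nat := #|Pblock j|.

Definition Ysub : {set {perm T}} :=
  [set s : {perm T} | [forall x, blk (s x) == blk x]].

(* Pi = (1/prod n_j!) sum_{h in Y} h ;  #|Y| = prod_j n_j! *)
Definition Pi : GA := gscale (#|Ysub|%:R)^-1 (\sum_(h in Ysub) gel h).

Definition frakr (a b : T) : GA := gmul Pi (gmul (gel (tperm a b)) Pi).

Definition tilder (i j : 'I_nu) (a b : T) : GA :=
  gscale (nblk i * nblk j)%:R (frakr a b).

End GroupAlgebra.

(* Main.v *)
Require Import Defs.
From HB Require Import structures.
From mathcomp Require Import all_boot all_order all_algebra all_fingroup all_field.
From mathcomp Require Import ring.
Import GRing.Theory Num.Theory.
Local Open Scope ring_scope.

Section Work.
Variable T : finType.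
Local Notation GA := {ffun {perm T} -> algC}.
Implicit Types a b c : GA.

Lemma gmulE a b g : gmul a b g = \sum_(h : {perm T}) a h * b (h^-1 * g)%g.
Proof. by rewrite ffunE. Qed.

Lemma gmulA a b c : gmul (gmul a b) c = gmul a (gmul b c).
Proof.
apply/ffunP=> g; rewrite !gmulE.
under eq_bigr do rewrite gmulE mulr_suml.
rewrite exchange_big /=; apply: eq_bigr => k _.
rewrite gmulE mulr_sumr (reindex_inj (mulgI k)) /=.
apply: eq_bigr => h _; rewrite mulKg invMg -mulgA mulrA //.
Qed.

Lemma gmulDl a b c : gmul (a + b) c = gmul a c + gmul b c.
Proof. apply/ffunP=> g; rewrite !ffunE -big_split; apply: eq_bigr => h _; by rewrite !ffunE mulrDl. Qed.
Lemma gmulDr a b c : gmul a (b + c) = gmul a b + gmul a c.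
Proof. apply/ffunP=> g; rewrite !ffunE -big_split; apply: eq_bigr => h _; by rewrite !ffunE mulrDr. Qed.
Lemma gmulNl a c : gmul (- a) c = - gmul a c.
Proof. apply/ffunP=> g; rewrite !ffunE -sumrN; apply: eq_bigr => h _; by rewrite !ffunE mulNr. Qed.
Lemma gmulNr a c : gmul a (- c) = - gmul a c.
Proof. apply/ffunP=> g; rewrite !ffunE -sumrN; apply: eq_bigr => h _; by rewrite !ffunE mulrN. Qed.
Lemma gmul0l a : gmul 0 a = 0.
Proof. apply/ffunP=> g; rewrite !ffunE big1 // => h _; by rewrite !ffunE mul0r. Qed.
Lemma gmul0r a : gmul a 0 = 0.
Proof. apply/ffunP=> g; rewrite !ffunE big1 // => h _; by rewrite !ffunE mulr0. Qed.
Lemma gmulMnl a c n : gmul (a *+ n) c = gmul a c *+ n.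
Proof. elim: n => [|n IH]; first by rewrite !mulr0n gmul0l. by rewrite !mulrS gmulDl IH. Qed.
Lemma gmulMnr a c n : gmul a (c *+ n) = gmul a c *+ n.
Proof. elim: n => [|n IH]; first by rewrite !mulr0n gmul0r. by rewrite !mulrS gmulDr IH. Qed.
Lemma gmul_suml (I : Type) (r : seq I) (P : pred I) (F : I -> GA) c :
  gmul (\sum_(i <- r | P i) F i) c = \sum_(i <- r | P i) gmul (F i) c.
Proof. apply: (big_rec2 (fun y1 y2 => gmul y1 c = y2)) => [|i x y _ <-]; [exact: gmul0l|exact: gmulDl]. Qed.
Lemma gmul_sumr (I : Type) (r : seq I) (P : pred I) (F : I -> GA) c :
  gmul c (\sum_(i <- r | P i) F i) = \sum_(i <- r | P i) gmul c (F i).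
Proof. apply: (big_rec2 (fun y1 y2 => gmul c y1 = y2)) => [|i x y _ <-]; [exact: gmul0r|exact: gmulDr]. Qed.

Lemma gelE (g h : {perm T}) : gel g h = (h == g)%:R.
Proof. by rewrite ffunE. Qed.

Lemma gel_mul (g h : {perm T}) : gmul (gel g) (gel h) = gel (g * h).
Proof.
apply/ffunP=> z; rewrite gmulE (bigD1 g) //= big1; last first.
  by move=> k /negbTE kg; rewrite gelE kg mul0r.
rewrite !gelE eqxx mul1r addr0; congr (_%:R).
by rewrite -(inj_eq (mulgI g)) mulKVg.
Qed.

Definition gc a b := gmul a b = gmul b a.

Lemma gc_conj (A B : GA) : (forall g k, B g != 0 -> A (k ^ g)%g = A k) -> gc A B.
Proof.
move=> H; apply/ffunP=> z; rewrite !gmulE; symmetry.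
rewrite (reindex_inj (h := fun k => k^-1 * z)%g); last by move=> x y /mulIg /invg_inj.
apply: eq_bigr => k _ /=.
have [->|nz] := eqVneq (B (k^-1 * z)%g) 0; first by rewrite mulr0 mul0r.
rewrite mulrC -(H _ k nz); congr (A _ * _).
by rewrite conjgE invMg invgK !mulgA mulgK.
Qed.

Lemma gc_sym a b : gc a b -> gc b a. Proof. by []. Qed.
Lemma gc_refl a : gc a a. Proof. by []. Qed.
Lemma gcD a b c : gc a b -> gc a c -> gc a (b + c).
Proof. by rewrite /gc gmulDl gmulDr => -> ->. Qed.
Lemma gcN a b : gc a b -> gc a (- b).
Proof. by rewrite /gc gmulNl gmulNr => ->. Qed.
Lemma gcB a b c : gc a b -> gc a c -> gc a (b - c).
Proof. by move=> ? ?; apply: gcD => //; apply: gcN. Qed.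
Lemma gcMn a b n : gc a b -> gc a (b *+ n).
Proof. by rewrite /gc gmulMnl gmulMnr => ->. Qed.
Lemma gcMn_inv a b n : (0 < n)%N -> gc a (b *+ n) -> gc a b.
Proof.
rewrite /gc gmulMnl gmulMnr => n0 /ffunP H; apply/ffunP => z.
move: (H z); rewrite !ffunMnE => /eqP; rewrite -subr_eq0 -mulrnBl mulrn_eq0.
by rewrite -[n == 0%N]negbK -lt0n n0 /= subr_eq0 => /eqP.
Qed.


Variable nu : nat.
Variable blk : T -> 'I_nu.
Local Notation Y := (Ysub blk).
Local Notation PI := (Pi blk).

Lemma YP (s : {perm T}) : s \in Y -> forall x, blk (s x) = blk x.
Proof. by rewrite inE => /forallP H x; apply/eqP. Qed.
Arguments YP {s}.
Lemma inY (s : {perm T}) : (forall x, blk (s x) = blk x) -> s \in Y.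
Proof. by move=> H; rewrite inE; apply/forallP => x; rewrite H. Qed.
Lemma Y_mul (s t : {perm T}) : s \in Y -> t \in Y -> (s * t)%g \in Y.
Proof. by move=> sY tY; apply: inY => x; rewrite permM (YP tY) (YP sY). Qed.
Lemma Y_inv (s : {perm T}) : s \in Y -> (s^-1)%g \in Y.
Proof. by move=> sY; apply: inY => x; rewrite -{2}(permKV s x) (YP sY). Qed.
Lemma Y1 : (1%g : {perm T}) \in Y.
Proof. by apply: inY => x; rewrite perm1. Qed.
Lemma memY_mulr (h z : {perm T}) : h \in Y -> ((z * h)%g \in Y) = (z \in Y).
Proof.
move=> hY; apply/idP/idP => [zhY|zY]; last exact: Y_mul.
by rewrite -(mulgK h z); apply: Y_mul => //; apply: Y_inv.
Qed.
Lemma memY_mull (h z : {perm T}) : h \in Y -> ((h * z)%g \in Y) = (z \in Y).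
Proof.
move=> hY; apply/idP/idP => [zhY|zY]; last exact: Y_mul.
by rewrite -(mulKg h z); apply: Y_mul => //; apply: Y_inv.
Qed.

Lemma PiE (z : {perm T}) : PI z = (#|Y|%:R)^-1 * (z \in Y)%:R.
Proof.
rewrite /Pi ffunE sum_ffunE; congr (_ * _).
under eq_bigr do rewrite gelE.
case: (boolP (z \in Y)) => zY.
  rewrite (bigD1 z) //= eqxx big1 ?addr0 // => h /andP[_ /negbTE hz].
  by rewrite eq_sym hz.
by rewrite big1 // => h hY; case: eqP => // ez; rewrite ez hY in zY.
Qed.

Lemma mul_gelE a (g z : {perm T}) : gmul a (gel g) z = a (z * g^-1)%g.
Proof.
rewrite gmulE (bigD1 (z * g^-1)%g) //= big1; last first.
  move=> k /negbTE kg; rewrite gelE.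
  case: eqP => [e|]; last by rewrite mulr0.
  by rewrite -e invMg invgK mulKVg eqxx in kg.
by rewrite gelE invMg invgK mulgKV eqxx mulr1 addr0.
Qed.

Lemma gel_mulE a (g z : {perm T}) : gmul (gel g) a z = a (g^-1 * z)%g.
Proof.
rewrite gmulE (bigD1 g) //= big1; last by move=> k /negbTE kg; rewrite gelE kg mul0r.
by rewrite gelE eqxx mul1r addr0.
Qed.

Lemma Pi_gelr (h : {perm T}) : h \in Y -> gmul PI (gel h) = PI.
Proof. by move=> hY; apply/ffunP => z; rewrite mul_gelE !PiE memY_mulr // Y_inv. Qed.
Lemma Pi_gell (h : {perm T}) : h \in Y -> gmul (gel h) PI = PI.
Proof. by move=> hY; apply/ffunP => z; rewrite gel_mulE !PiE memY_mull // Y_inv. Qed.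

Lemma cardY_gt0 : (0 < #|Y|)%N.
Proof. by apply/card_gt0P; exists 1%g; exact: Y1. Qed.

Lemma PiPi : gmul PI PI = PI.
Proof.
apply/ffunP => z; rewrite gmulE (bigID (mem Y)) /= [X in _ + X]big1; last first.
  by move=> h hY; rewrite PiE (negbTE hY) mulr0 mul0r.
rewrite addr0 (eq_bigr (fun _ => (#|Y|%:R)^-1 * PI z)); last first.
  by move=> h hY; rewrite !PiE hY memY_mull ?Y_inv // mulr1.
rewrite sumr_const -mulrnAl -(mulr_natr ((#|Y|%:R)^-1) #|Y|) mulVf ?mul1r //.
by rewrite pnatr_eq0 -lt0n cardY_gt0.
Qed.
Definition R (S1 S2 : {set T}) : GA :=
  \sum_(x in S1) \sum_(y in S2) gel (tperm x y).

Lemma RE S1 S2 (z : {perm T}) :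
  R S1 S2 z = \sum_(x in S1) \sum_(y in S2) (z == tperm x y)%:R.
Proof.
rewrite /R sum_ffunE; apply: eq_bigr => x _; rewrite sum_ffunE.
by apply: eq_bigr => y _; rewrite gelE.
Qed.

Definition pres (g : {perm T}) (S : {set T}) := forall x, (g x \in S) = (x \in S).

Lemma R_conj (g : {perm T}) S1 S2 : pres g S1 -> pres g S2 ->
  forall k, R S1 S2 (k ^ g)%g = R S1 S2 k.
Proof.
move=> p1 p2 k; rewrite !RE (reindex_inj (@perm_inj _ g)) /=.
rewrite (eq_bigl (mem S1)); last by move=> x; rewrite /= p1.
apply: eq_bigr => x _; rewrite (reindex_inj (@perm_inj _ g)) /=.
rewrite (eq_bigl (mem S2)); last by move=> y; rewrite /= p2.
by apply: eq_bigr => y _; rewrite -tpermJ (inj_eq (@conjg_inj _ g)).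
Qed.

Lemma R_ne0 S1 S2 (g : {perm T}) : R S1 S2 g != 0 ->
  exists x y, [/\ x \in S1, y \in S2 & g = tperm x y].
Proof.
case: (pickP [pred xy : T * T | (xy.1 \in S1) && (xy.2 \in S2) && (g == tperm xy.1 xy.2)]).
  by move=> [x y] /= /andP[/andP[xS yS] /eqP ->] _; exists x, y.
move=> H; rewrite RE big1 ?eqxx // => x xS; rewrite big1 // => y yS.
by have := H (x, y); rewrite /= xS yS /= => ->.
Qed.

Lemma pres_tperm z w (S : {set T}) : (z \in S) = (w \in S) -> pres (tperm z w) S.
Proof. by move=> e x; case: tpermP => [->|->|] //; rewrite e. Qed.

Lemma gcR (S1 S2 S3 S4 : {set T}) :
  (forall z w, z \in S3 -> w \in S4 -> pres (tperm z w) S1 /\ pres (tperm z w) S2) ->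
  gc (R S1 S2) (R S3 S4).
Proof.
move=> H; apply: gc_conj => g k /R_ne0 [z [w [zS wS ->]]].
by case: (H z w zS wS) => p1 p2; apply: R_conj.
Qed.

Lemma gcRPi S1 S2 : (forall s, s \in Y -> pres s S1 /\ pres s S2) -> gc (R S1 S2) PI.
Proof.
move=> H; apply: gc_conj => g k; rewrite PiE.
case: (boolP (g \in Y)) => gY; last by rewrite mulr0 eqxx.
by move=> _; case: (H g gY) => p1 p2; apply: R_conj.
Qed.

Lemma R_sym S1 S2 : R S1 S2 = R S2 S1.
Proof. rewrite /R exchange_big; apply: eq_bigr => y _; apply: eq_bigr => x _; by rewrite tpermC. Qed.

Lemma R_splitl (A B S : {set T}) : (forall x, x \in A -> x \notin B) ->
  R (A :|: B) S = R A S + R B S.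
Proof.
move=> H; rewrite /R (bigID (mem A)) /=; congr (_ + _); apply: eq_bigl => x.
  by rewrite in_setU; case: (boolP (x \in A)) => hA //=; rewrite andbF.
rewrite in_setU; case: (boolP (x \in A)) => hA /=; last by rewrite andbT.
by rewrite (negbTE (H x hA)).
Qed.

Lemma R_splitr (A B S : {set T}) : (forall x, x \in A -> x \notin B) ->
  R S (A :|: B) = R S A + R S B.
Proof. by move=> H; rewrite R_sym R_splitl // !(R_sym _ S). Qed.

Definition F x := gmul PI (gmul x PI).

Lemma F_add x y : F (x + y) = F x + F y.
Proof. by rewrite /F gmulDl gmulDr. Qed.

Lemma F_conj (g h : {perm T}) : h \in Y -> F (gel (g ^ h)%g) = F (gel g).
Proof.
move=> hY; rewrite /F conjgE -!gel_mul !gmulA Pi_gell //.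
by rewrite -(gmulA PI) Pi_gelr // Y_inv.
Qed.

Lemma swapPI a z : gc a PI -> gmul a (gmul PI z) = gmul PI (gmul a z).
Proof. by move=> aP; rewrite -gmulA aP gmulA. Qed.
Lemma PIPI z : gmul PI (gmul PI z) = gmul PI z.
Proof. by rewrite -gmulA PiPi. Qed.

Lemma sandwich_comm a x : gc a PI -> gc a x -> gcomm (F a) (F x) = 0.
Proof.
move=> aP ax; rewrite /gcomm /F.
have -> : gmul (gmul PI (gmul a PI)) (gmul PI (gmul x PI)) = gmul PI (gmul (gmul a x) PI).
  by rewrite !gmulA PIPI swapPI // PIPI.
have -> : gmul (gmul PI (gmul x PI)) (gmul PI (gmul a PI)) = gmul PI (gmul (gmul x a) PI).
  by rewrite !gmulA PIPI -(@swapPI a PI aP) PiPi.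
by rewrite ax subrr.
Qed.

Lemma F_sum (I : finType) (P : pred I) (G : I -> GA) :
  F (\sum_(i in P) G i) = \sum_(i in P) F (G i).
Proof. by rewrite /F gmul_suml gmul_sumr. Qed.

Lemma tperm_Y z w : blk z = blk w -> tperm z w \in Y.
Proof. by move=> e; apply: inY => x; case: tpermP => [->|->|]. Qed.

Lemma neq_blk u v : blk u != blk v -> u != v.
Proof. by apply: contraNneq => ->. Qed.

Lemma key (i j : 'I_nu) (a b x y : T) : blk a = i -> blk b = j -> i != j ->
  x \in Pblock blk i -> y \in Pblock blk j ->
  F (gel (tperm x y)) = F (gel (tperm a b)).
Proof.
move=> ha hb ij; rewrite !inE => /eqP hx /eqP hy.
have ab : a != b by apply: neq_blk; rewrite ha hb.
have xb : x != b by apply: neq_blk; rewrite hx hb.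
have xy : x != y by apply: neq_blk; rewrite hx hy.
have e : tperm x y = (((tperm a b) ^ (tperm a x)) ^ (tperm b y))%g.
  by rewrite !tpermJ tpermL (tpermD (y:=x)) ?(eq_sym b) // tpermL tpermD // eq_sym.
by rewrite e !F_conj // tperm_Y // ?hx ?hy.
Qed.

Lemma tilder_R (i j : 'I_nu) (a b : T) : blk a = i -> blk b = j -> i != j ->
  tilder blk i j a b = F (R (Pblock blk i) (Pblock blk j)).
Proof.
move=> ha hb ij; rewrite /R F_sum.
rewrite (eq_bigr (fun _ => F (gel (tperm a b)) *+ #|Pblock blk j|)); last first.
  move=> x xP; rewrite F_sum -sumr_const; apply: eq_bigr => y yP.
  exact: (@key i j a b x y ha hb ij xP yP).
rewrite sumr_const -mulrnA; apply/ffunP => z.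
rewrite /tilder ffunE ffunMnE mulr_natl mulnC /nblk.
by [].
Qed.


Lemma main :
  (2 <= nu)%N ->
  (forall j : 'I_nu, (0 < nblk blk j)%N) ->
  (forall (i j k : 'I_nu) (a b c d e f : T),
      i != j -> j != k -> i != k ->
      blk a = i -> blk b = j ->
      blk c = j -> blk d = k ->
      blk e = i -> blk f = k ->
      gcomm (tilder blk i j a b)
            (tilder blk j k c d + tilder blk i k e f) = 0)
  /\
  (forall (i j k l : 'I_nu) (a b c d : T),
      i != j -> i != k -> i != l -> j != k -> j != l -> k != l ->
      blk a = i -> blk b = j -> blk c = k -> blk d = l ->
      gcomm (tilder blk i j a b) (tilder blk k l c d) = 0).
Proof.
move=> _ _; split.
  move=> i j k a b c d e f ij jk ik ha hb hc hd he hf.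
  have ji : j != i by rewrite eq_sym.
  have kj : k != j by rewrite eq_sym.
  have ki : k != i by rewrite eq_sym.
  rewrite (tilder_R _ _ _ _ ha hb ij) (tilder_R _ _ _ _ hc hd jk) (tilder_R _ _ _ _ he hf ik) -F_add.
  apply: sandwich_comm.
    by apply: gcRPi => s sY; split => x; rewrite !inE (YP sY).
  apply: (@gcMn_inv _ _ 2) => //.
  set Pi_ := Pblock blk i; set Pj := Pblock blk j; set Pk := Pblock blk k.
  have dij : forall x, x \in Pi_ -> x \notin Pj.
    by move=> x; rewrite !inE => /eqP ->.
  have dVk : forall x, x \in Pi_ :|: Pj -> x \notin Pk.
    by move=> x; rewrite !inE => /orP[] /eqP ->.
  have -> : (R Pj Pk + R Pi_ Pk) *+ 2 =
      R (Pi_ :|: Pj :|: Pk) (Pi_ :|: Pj :|: Pk) - R (Pi_ :|: Pj) (Pi_ :|: Pj) - R Pk Pk.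
    rewrite (R_splitl _ _ _ dVk) !(R_splitr _ _ _ dVk) (R_sym Pk) !(R_splitl _ _ _ dij).
    by apply/ffunP => z; rewrite !(ffunE, ffunMnE); ring.
  apply: gcB; [apply: gcB|].
  - apply: gc_sym; apply: gcR => z w; rewrite !inE => /eqP hz /eqP hw.
    by split; apply: pres_tperm; rewrite !inE hz hw !eqxx ?(negbTE ij, negbTE ji, negbTE ik, negbTE ki, negbTE jk, negbTE kj) /= ?orbT.
  - apply: gc_sym; apply: gcR => z w; rewrite !inE => /eqP hz /eqP hw.
    by split; apply: pres_tperm; rewrite !inE hz hw !eqxx ?(negbTE ij, negbTE ji, negbTE ik, negbTE ki, negbTE jk, negbTE kj) /= ?orbT.
  - apply: gcR => z w; rewrite !inE => /eqP hz /eqP hw.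
    by split; apply: pres_tperm; rewrite !inE hz hw ?(negbTE ij, negbTE ji, negbTE ik, negbTE ki, negbTE jk, negbTE kj).
move=> i j k l a b c d ij ik il jk jl kl ha hb hc hd.
rewrite (tilder_R _ _ _ _ ha hb ij) (tilder_R _ _ _ _ hc hd kl).
apply: sandwich_comm.
  by apply: gcRPi => s sY; split => x; rewrite !inE (YP sY).
apply: gcR => z w; rewrite !inE => /eqP hz /eqP hw.
have ki : k != i by rewrite eq_sym.
have li : l != i by rewrite eq_sym.
have kj : k != j by rewrite eq_sym.
have lj : l != j by rewrite eq_sym.
by split; apply: pres_tperm; rewrite !inE hz hw ?(negbTE ki, negbTE li, negbTE kj, negbTE lj).
Qed.

End Work.

Theorem theorem2 (nu : nat) (T : finType) (blk : T -> 'I_nu) :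
  (2 <= nu)%N ->
  (forall j : 'I_nu, (0 < nblk blk j)%N) ->
  (forall (i j k : 'I_nu) (a b c d e f : T),
      i != j -> j != k -> i != k ->
      blk a = i -> blk b = j ->
      blk c = j -> blk d = k ->
      blk e = i -> blk f = k ->
      gcomm (tilder blk i j a b)
            (tilder blk j k c d + tilder blk i k e f) = 0)
  /\
  (forall (i j k l : 'I_nu) (a b c d : T),
      i != j -> i != k -> i != l -> j != k -> j != l -> k != l ->
      blk a = i -> blk b = j -> blk c = k -> blk d = l ->
      gcomm (tilder blk i j a b) (tilder blk k l c d) = 0).
Proof. exact: (@main T nu blk). Qed.
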